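(* Let $\varepsilon\in\{0,\tfrac12\}$. Every commutative post-Lie algebra structure on the Schrödinger–Virasoro Lie algebra $\mathcal{SV}(\varepsilon)$ is trivial: if $\cdot$ is a commutative post-Lie algebra structure on $\mathcal{SV}(\varepsilon)$, then $x\cdot y=0$ for all $x,y\in\mathcal{SV}(\varepsilon)$.
   Context: For $\varepsilon\in\{0,\frac12\}$, $\mathcal{SV}(\varepsilon)$ is the complex Lie algebra with basis $\{L_i,Y_j,M_i\mid i\in\mathbb{Z},\ j\in\varepsilon+\mathbb{Z}\}$ and brackets $[L_m,L_n]=(m-n)L_{m+n}$, $[L_m,Y_n]=(\frac12 m-n)Y_{m+n}$, $[L_m,M_n]=-nM_{m+n}$, $[Y_m,Y_n]=(m-n)M_{m+n}$, $[Y_m,M_n]=[M_m,M_n]=0$. A commutative post-Lie algebra structure on a complex Lie algebra $(L,[\,,])$ is a $\mathbb{C}$-bilinear product $x\cdot y$ on $L$ such that for all $x,y,z\in L$: $x\cdot y=y\cdot x$; $[x,y]\cdot z=x\cdot(y\cdot z)-y\cdot(x\cdot z)$; and $x\cdot[y,z]=[x\cdot y,z]+[y,x\cdot z]$. *)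

(* Defs.v *)
(* The Schroedinger-Virasoro Lie algebra SV(eps) over C,
   realised as the free C-vector space (finitely supported functions, via
   multinomials' monalg) on the basis {L_i, Y_j, M_i}. *)
From mathcomp Require Import all_boot all_algebra.
From mathcomp Require Import Rstruct.
From mathcomp.real_closed Require Import complex.
From mathcomp Require Import finmap.
From mathcomp.multinomials Require Import monalg.

Set Implicit Arguments.
Unset Strict Implicit.
Unset Printing Implicit Defensive.

Import GRing.Theory Num.Theory.
Local Open Scope ring_scope.

Notation CC := (Rdefinitions.R[i]).

(* Basis indices:
     inl (inl i)  ~  L_i        (i : int)
     inl (inr k)  ~  Y_(k + eps) (k : int; so j ranges over eps + Z)
     inr i        ~  M_i        (i : int)                                *)
Definition SVidx := (int + int + int)%type.

Definition Lidx (i : int) : SVidx := inl (inl i).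
Definition Yidx (k : int) : SVidx := inl (inr k).
Definition Midx (i : int) : SVidx := inr i.

Definition SV := {malg CC[SVidx]}.

(* eps is encoded by a boolean e : eps = 0 if e = false, eps = 1/2 if e = true;
   thus 2*eps = (e : int). *)
Definition epsC (e : bool) : CC := (e%:R) / 2%:R.

Definition Lb (i : int) : SV := << Lidx i >>.
Definition Yb (k : int) : SV := << Yidx k >>.
Definition Mb (i : int) : SV := << Midx i >>.

Definition brb (e : bool) (a b : SVidx) : SV :=
  match a, b with
  | inl (inl m), inl (inl n) => (m - n)%:~R *: Lb (m + n)
  | inl (inl m), inl (inr k) =>
      (m%:~R / 2%:R - (k%:~R + epsC e)) *: Yb (m + k)
  | inl (inr k), inl (inl m) =>
      - (m%:~R / 2%:R - (k%:~R + epsC e)) *: Yb (m + k)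
  | inl (inl m), inr n => (- n)%:~R *: Mb (m + n)
  | inr n, inl (inl m) => n%:~R *: Mb (m + n)
  (* [Y_(a+eps), Y_(b+eps)] = (a - b) M_(a + b + 2 eps) *)
  | inl (inr a), inl (inr b) => (a - b)%:~R *: Mb (a + b + (e : int))
  | _, _ => 0
  end.

Definition svbr (e : bool) (x y : SV) : SV :=
  \sum_(a <- msupp x) \sum_(b <- msupp y) (x@_a * y@_b) *: brb e a b.

Definition is_comm_postLie (e : bool) (pr : SV -> SV -> SV) : Prop :=
  (forall (c : CC) (x y z : SV), pr (c *: x + y) z = c *: pr x z + pr y z) /\
  (forall (c : CC) (x y z : SV), pr x (c *: y + z) = c *: pr x y + pr x z) /\
  (forall x y : SV, pr x y = pr y x) /\
  (forall x y z : SV, pr (svbr e x y) z = pr x (pr y z) - pr y (pr x z)) /\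
  (forall x y z : SV, pr x (svbr e y z) = svbr e (pr x y) z + svbr e y (pr x z)).

(* Main.v *)
Require Import Defs.
From mathcomp Require Import all_boot all_algebra.
From mathcomp Require Import Rstruct.
From mathcomp.real_closed Require Import complex.
From mathcomp Require Import finmap.
From mathcomp.multinomials Require Import monalg.
From mathcomp Require Import ring zify.
Set Implicit Arguments.
Unset Strict Implicit.
Unset Printing Implicit Defensive.
Import GRing.Theory Num.Theory.
Local Open Scope ring_scope.

Section S.
Variable e : bool.
Lemma brb_anti (a b : SVidx) : brb e a b = - brb e b a.
Proof.
destruct a as [[m|k]|n]; destruct b as [[m'|k']|n']; unfold brb.
- rewrite (addrC m' m) -scaleNr; congr (_ *: _); ring.
- rewrite -scaleNr; congr (_ *: _); ring.
- rewrite -scaleNr; congr (_ *: _); ring.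
- rewrite -scaleNr; congr (_ *: _); ring.
- rewrite (addrC k' k) -scaleNr; congr (_ *: _); ring.
- by rewrite oppr0.
- rewrite -scaleNr; congr (_ *: _); ring.
- by rewrite oppr0.
- by rewrite oppr0.
Qed.

Lemma msupp_b (a : SVidx) : msupp (<<a>> : SV) = [fset a]%fset.
Proof. by rewrite msuppU oner_eq0. Qed.

Lemma svbr_basis (a b : SVidx) : svbr e <<a>> <<b>> = brb e a b.
Proof. by rewrite /svbr !msupp_b !big_seq_fset1 !mcoeffUU mulr1 scale1r. Qed.

Lemma svbr_r (v : SV) (b : SVidx) : svbr e v <<b>> = \sum_(a <- msupp v) v@_a *: brb e a b.
Proof.
rewrite /svbr; apply: eq_bigr => a _.
by rewrite msupp_b big_seq_fset1 mcoeffUU mulr1.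
Qed.

Lemma svbr0r (v : SV) : svbr e v 0 = 0.
Proof. by rewrite /svbr msupp0; apply: big1 => a _; rewrite big_seq_fset0. Qed.

Lemma svbr0l (v : SV) : svbr e 0 v = 0.
Proof. by rewrite /svbr msupp0 big_seq_fset0. Qed.

Lemma svbr_anti (x y : SV) : svbr e x y = - svbr e y x.
Proof.
rewrite /svbr (exchange_big) -sumrN; apply: eq_bigr => b _.
rewrite -sumrN; apply: eq_bigr => a _.
by rewrite brb_anti scalerN mulrC.
Qed.

Lemma zmod3 (V : zmodType) (A B C : V) : A - B + (C - A) + (B - C) = 0.
Proof.
rewrite addrC (addrC (A - B)) (addrA (B - C)) (addrA (B - C)) subrK.
by rewrite addrA subrK subrr.
Qed.

Variable pr : SV -> SV -> SV.
Hypothesis HP : is_comm_postLie e pr.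

Lemma prL (c : CC) (x y z : SV) : pr (c *: x + y) z = c *: pr x z + pr y z.
Proof. by case: HP. Qed.
Lemma prR (c : CC) (x y z : SV) : pr x (c *: y + z) = c *: pr x y + pr x z.
Proof. by case: HP => _ []. Qed.
Lemma prC (x y : SV) : pr x y = pr y x.
Proof. by case: HP => _ [] _ []. Qed.
Lemma prH (x y z : SV) : pr (svbr e x y) z = pr x (pr y z) - pr y (pr x z).
Proof. by case: HP => _ [] _ [] _ []. Qed.
Lemma prD (x y z : SV) : pr x (svbr e y z) = svbr e (pr x y) z + svbr e y (pr x z).
Proof. by case: HP => _ [] _ [] _ []. Qed.

Lemma pr0r (x : SV) : pr x 0 = 0.
Proof.
have E := prR 1 x 0 0; rewrite scale1r addr0 scale1r in E.
by apply: (@addrI _ (pr x 0)); rewrite -E addr0.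
Qed.
Lemma prZr (c : CC) (x y : SV) : pr x (c *: y) = c *: pr x y.
Proof. by have := prR c x y 0; rewrite !addr0 pr0r addr0. Qed.
Lemma prDr (x y z : SV) : pr x (y + z) = pr x y + pr x z.
Proof. by have := prR 1 x y z; rewrite !scale1r. Qed.
Lemma prZl (c : CC) (x y : SV) : pr (c *: x) y = c *: pr x y.
Proof. by rewrite prC prZr prC. Qed.
Lemma prNr (x y : SV) : pr x (- y) = - pr x y.
Proof. by rewrite -scaleN1r prZr scaleN1r. Qed.
Lemma prsumr (x : SV) (s : seq SVidx) (F : SVidx -> SV) :
  pr x (\sum_(a <- s) F a) = \sum_(a <- s) pr x (F a).
Proof.
elim: s => [|a s IH]; first by rewrite !big_nil pr0r.
by rewrite !big_cons prDr IH.
Qed.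

End S.

Section S2.
Variable e : bool.
Variable pr : SV -> SV -> SV.
Hypothesis HP : is_comm_postLie e pr.

Lemma CI (x y z : SV) : pr x (svbr e y z) + pr y (svbr e z x) + pr z (svbr e x y) = 0.
Proof.
rewrite !(prD HP) (prC HP y x) (prC HP z x) (prC HP z y).
rewrite [svbr e y (pr x z)]svbr_anti [svbr e z (pr x y)]svbr_anti.
by rewrite [svbr e x (pr y z)]svbr_anti zmod3.
Qed.

Definition h : SV := << Lidx 0 >>.
Definition deg (a : SVidx) : CC :=
  match a with inl (inl i) => i%:~R | inl (inr k) => k%:~R + epsC e | inr i => i%:~R end.
Definition P (a b : SVidx) : SV := pr <<a>> <<b>>.

Lemma brb_0r (a : SVidx) : brb e a (Lidx 0) = deg a *: <<a>>.
Proof.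
destruct a as [[m|k]|n]; unfold Lidx, brb, deg.
- rewrite /Lb /Lidx addr0; congr (_ *: _); ring.
- rewrite /Yb /Yidx add0r; congr (_ *: _); ring.
- rewrite /Mb /Midx add0r; congr (_ *: _).
Qed.

Lemma brb_0l (a : SVidx) : brb e (Lidx 0) a = - deg a *: <<a>>.
Proof.
destruct a as [[m|k]|n]; unfold Lidx, brb, deg.
- rewrite /Lb /Lidx (add0r m); congr (_ *: _); ring.
- rewrite /Yb /Yidx (add0r k); congr (_ *: _); ring.
- rewrite /Mb /Midx (add0r n); congr (_ *: _); ring.
Qed.

Lemma R1 (a b : SVidx) : pr h (brb e a b) = (deg a - deg b) *: P a b.
Proof.
have := CI <<a>> <<b>> h.
rewrite /h !svbr_basis brb_0r brb_0l !(prZr HP) (prC HP <<b>> <<a>>) -/(P a b).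
move/eqP; rewrite addrC addr_eq0 => /eqP ->.
rewrite scalerBl scaleNr opprB; congr (_ + _).
Qed.

Lemma mcoeff_b (a c : SVidx) : (<<a>> : SV)@_c = (a == c)%:R.
Proof. by rewrite mcoeffU. Qed.

Lemma sum_single (v : SV) (f : SVidx -> CC) (d0 : SVidx) :
  (forall d, d != d0 -> f d = 0) -> \sum_(d <- msupp v) v@_d * f d = v@_d0 * f d0.
Proof.
move=> Hf.
have [Hin|Hout] := boolP (d0 \in msupp v).
  rewrite (big_fsetD1 d0) //= big1_fset ?addr0 // => d.
  by rewrite in_fsetD1 => /andP [Hd _] _; rewrite Hf // mulr0.
rewrite (mcoeff_outdom Hout) mul0r big1_fset // => d Hd _.
rewrite Hf ?mulr0 //; apply/negP => /eqP E; move: Hd; rewrite E => Hd.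
by move: Hout; rewrite Hd.
Qed.

Lemma coef_svbr (v : SV) (b c : SVidx) :
  (svbr e v <<b>>)@_c = \sum_(d <- msupp v) v@_d * (brb e d b)@_c.
Proof.
rewrite svbr_r raddf_sum; apply: eq_bigr => d _; exact: mcoeffZ.
Qed.

Lemma coef_M (v : SV) (n m : int) :
  (svbr e v (Mb n))@_(Midx m) = v@_(Lidx (m - n)) * (- n)%:~R.
Proof.
rewrite /Mb coef_svbr (@sum_single v _ (Lidx (m - n))).
  rewrite /Lidx /Midx /brb /Mb /Midx mcoeffZ mcoeff_b.
  have -> : (inr (m - n + n) == inr m :> SVidx) by apply/eqP; congr inr; lia.
  by rewrite mulr1.
move=> d; destruct d as [[i|k]|j] => Hd; rewrite /Midx /brb ?mcoeff0 //.
rewrite /Mb /Midx mcoeffZ mcoeff_b.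
have -> : (inr (i + n) == inr m :> SVidx) = false.
  apply/negbTE/eqP => [[E]]; move: Hd; rewrite /Lidx.
  have -> : i = m - n by lia.
  by rewrite eqxx.
by rewrite mulr0.
Qed.

Lemma coef_Y (v : SV) (n m : int) :
  (svbr e v (Yb n))@_(Midx m) = v@_(Yidx (m - n - (e:int))) * (m - n - (e:int) - n)%:~R.
Proof.
rewrite /Yb coef_svbr (@sum_single v _ (Yidx (m - n - (e:int)))).
  rewrite /Yidx /Midx /brb /Mb /Midx mcoeffZ mcoeff_b.
  have -> : (inr (m - n - (e:int) + n + (e:int)) == inr m :> SVidx) by apply/eqP; congr inr; lia.
  by rewrite mulr1.
move=> d; destruct d as [[i|k]|j] => Hd; rewrite /Yidx /brb ?mcoeff0 //.
- rewrite /Yb /Yidx /Midx mcoeffZ mcoeff_b.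
  have -> : (inl (inr (i + n)) == inr m :> SVidx) = false by [].
  by rewrite mulr0.
- rewrite /Mb /Midx mcoeffZ mcoeff_b.
  have -> : (inr (k + n + (e:int)) == inr m :> SVidx) = false.
    apply/negbTE/eqP => [[E]]; move: Hd; rewrite /Yidx.
    have -> : k = m - n - (e:int) by lia.
    by rewrite eqxx.
  by rewrite mulr0.
Qed.

Lemma tri (x y z s c1 c2 c3 : SVidx) (l1 m1 l2 m2 l3 m3 : CC) :
  brb e y z = l1 *: <<c1>> -> brb e x c1 = m1 *: <<s>> ->
  brb e z x = l2 *: <<c2>> -> brb e y c2 = m2 *: <<s>> ->
  brb e x y = l3 *: <<c3>> -> brb e z c3 = m3 *: <<s>> ->
  (l1 * m1 * (deg y - deg c2) * (deg z - deg c3)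
   + l2 * m2 * (deg x - deg c1) * (deg z - deg c3)
   + l3 * m3 * (deg x - deg c1) * (deg y - deg c2)) *: pr h <<s>> = 0.
Proof.
move=> E1 F1 E2 F2 E3 F3.
have C := CI <<x>> <<y>> <<z>>.
rewrite !svbr_basis E1 E2 E3 !(prZr HP) in C.
have G1 := R1 x c1; rewrite F1 (prZr HP) in G1.
have G2 := R1 y c2; rewrite F2 (prZr HP) in G2.
have G3 := R1 z c3; rewrite F3 (prZr HP) in G3.
rewrite /P in G1 G2 G3.
move: C G1 G2 G3.
move: (pr h <<s>>) (pr <<x>> <<c1>>) (pr <<y>> <<c2>>) (pr <<z>> <<c3>>) => D P1 P2 P3.
move: (deg x - deg c1) (deg y - deg c2) (deg z - deg c3) => d1 d2 d3.
move=> C G1 G2 G3.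
have T1 : (l1 * m1 * d2 * d3) *: D = (d1 * d2 * d3) *: (l1 *: P1).
  transitivity ((l1 * d2 * d3) *: (m1 *: D)).
    by rewrite scalerA; congr (_ *: _); ring.
  by rewrite G1 !scalerA; congr (_ *: _); ring.
have T2 : (l2 * m2 * d1 * d3) *: D = (d1 * d2 * d3) *: (l2 *: P2).
  transitivity ((l2 * d1 * d3) *: (m2 *: D)).
    by rewrite scalerA; congr (_ *: _); ring.
  by rewrite G2 !scalerA; congr (_ *: _); ring.
have T3 : (l3 * m3 * d1 * d2) *: D = (d1 * d2 * d3) *: (l3 *: P3).
  transitivity ((l3 * d1 * d2) *: (m3 *: D)).
    by rewrite scalerA; congr (_ *: _); ring.
  by rewrite G3 !scalerA; congr (_ *: _); ring.
by rewrite !scalerDl T1 T2 T3 -!scalerDr C scaler0.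
Qed.
End S2.

Section S3.
Variable e : bool.
Variable pr : SV -> SV -> SV.
Hypothesis HP : is_comm_postLie e pr.

Lemma scal_eq0 (c : CC) (v : SV) : c *: v = 0 -> c != 0 -> v = 0.
Proof. by move=> E Hc; move/eqP: E; rewrite scaler_eq0 (negbTE Hc) => /eqP. Qed.

Lemma neq0_by (c d : CC) : c = d -> d != 0 -> c != 0.
Proof. by move->. Qed.

Lemma Mb_eq (i j : int) : i = j -> Mb i = <<Midx j>>.
Proof. by move->. Qed.
Lemma Lb_eq (i j : int) : i = j -> Lb i = <<Lidx j>>.
Proof. by move->. Qed.
Lemma Yb_eq (i j : int) : i = j -> Yb i = <<Yidx j>>.
Proof. by move->. Qed.

Lemma intr_neq0 (z : int) : z != 0 -> (z%:~R : CC) != 0.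
Proof. by rewrite intr_eq0. Qed.

Lemma DM_nz (s : int) : s != 0 -> pr (h) <<Midx s>> = 0.
Proof.
move=> Hs.
have E1 : brb e (Lidx (-1)) (Midx s) = (- s)%:~R *: <<Midx (-1 + s)>> by reflexivity.
have F1 : brb e (Lidx 1) (Midx (-1 + s)) = (- (-1 + s))%:~R *: <<Midx s>>.
  rewrite /brb /Lidx /Midx (Mb_eq (j := s)); [reflexivity|lia].
have E2 : brb e (Midx s) (Lidx 1) = s%:~R *: <<Midx (1 + s)>> by reflexivity.
have F2 : brb e (Lidx (-1)) (Midx (1 + s)) = (- (1 + s))%:~R *: <<Midx s>>.
  rewrite /brb /Lidx /Midx (Mb_eq (j := s)); [reflexivity|lia].
have E3 : brb e (Lidx 1) (Lidx (-1)) = (1 - (-1))%:~R *: <<Lidx (1 + (-1))>> by reflexivity.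
have F3 : brb e (Midx s) (Lidx (1 + (-1))) = s%:~R *: <<Midx s>>.
  rewrite /brb /Lidx /Midx (Mb_eq (j := s)); [reflexivity|lia].
have T := tri HP E1 F1 E2 F2 E3 F3.
apply: (scal_eq0 T); apply: (neq0_by (d := -8 * s%:~R)).
  cbv beta iota delta [deg Lidx Yidx Midx]; ring.
apply: mulf_neq0; last exact: intr_neq0.
by rewrite oppr_eq0 pnatr_eq0.
Qed.

Lemma DM0 : pr h <<Midx 0>> = 0.
Proof.
have E1 : brb e (Lidx (-1)) (Midx (-1)) = (- (-1))%:~R *: <<Midx (-1 + -1)>> by reflexivity.
have F1 : brb e (Lidx 2) (Midx (-1 + -1)) = (- (-1 + -1))%:~R *: <<Midx 0>>.
  rewrite /brb /Lidx /Midx (Mb_eq (j := 0)); [reflexivity|lia].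
have E2 : brb e (Midx (-1)) (Lidx 2) = (-1)%:~R *: <<Midx (2 + -1)>> by reflexivity.
have F2 : brb e (Lidx (-1)) (Midx (2 + -1)) = (- (2 + -1))%:~R *: <<Midx 0>>.
  rewrite /brb /Lidx /Midx (Mb_eq (j := 0)); [reflexivity|lia].
have E3 : brb e (Lidx 2) (Lidx (-1)) = (2 - (-1))%:~R *: <<Lidx (2 + (-1))>> by reflexivity.
have F3 : brb e (Midx (-1)) (Lidx (2 + (-1))) = (-1)%:~R *: <<Midx 0>>.
  rewrite /brb /Lidx /Midx (Mb_eq (j := 0)); [reflexivity|lia].
have T := tri HP E1 F1 E2 F2 E3 F3.
apply: (scal_eq0 T); apply: (neq0_by (d := 24)).
  cbv beta iota delta [deg Lidx Yidx Midx]; ring.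
by rewrite pnatr_eq0.
Qed.

Lemma DM (s : int) : pr h <<Midx s>> = 0.
Proof.
have [->|Hs] := eqVneq s 0; first exact: DM0.
exact: DM_nz.
Qed.

Lemma epsC_false : epsC false = 0.
Proof. by rewrite /epsC mul0r. Qed.
Lemma epsC_true : epsC true = 1 / 2.
Proof. by []. Qed.

Lemma K_neq0 (s : int) : (e = true \/ s != 0) -> (s%:~R + epsC e : CC) != 0.
Proof.
case: e => [_|[//|Hs]].
  rewrite epsC_true; apply: (neq0_by (d := (2 * s + 1)%:~R / 2)).
    by field.
  apply: mulf_neq0; last by rewrite invr_eq0 pnatr_eq0.
  apply: intr_neq0; lia.
by rewrite epsC_false addr0 intr_neq0.
Qed.

Lemma DY_nz (s : int) : (e = true \/ s != 0) -> pr h <<Yidx s>> = 0.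
Proof.
move=> Hs.
have E1 : brb e (Lidx (-1)) (Yidx s) = ((-1)%:~R / 2 - (s%:~R + epsC e)) *: <<Yidx (-1 + s)>>
  by reflexivity.
have F1 : brb e (Lidx 1) (Yidx (-1 + s)) = (1%:~R / 2 - ((-1 + s)%:~R + epsC e)) *: <<Yidx s>>.
  rewrite /brb /Lidx /Yidx (Yb_eq (j := s)); [reflexivity|lia].
have E2 : brb e (Yidx s) (Lidx 1) = (- (1%:~R / 2 - (s%:~R + epsC e))) *: <<Yidx (1 + s)>>
  by reflexivity.
have F2 : brb e (Lidx (-1)) (Yidx (1 + s)) = ((-1)%:~R / 2 - ((1 + s)%:~R + epsC e)) *: <<Yidx s>>.
  rewrite /brb /Lidx /Yidx (Yb_eq (j := s)); [reflexivity|lia].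
have E3 : brb e (Lidx 1) (Lidx (-1)) = (1 - (-1))%:~R *: <<Lidx (1 + (-1))>> by reflexivity.
have F3 : brb e (Yidx s) (Lidx (1 + (-1))) = (- ((1 + (-1))%:~R / 2 - (s%:~R + epsC e))) *: <<Yidx s>>.
  rewrite /brb /Lidx /Yidx (Yb_eq (j := s)); [reflexivity|lia].
have T := tri HP E1 F1 E2 F2 E3 F3.
apply: (scal_eq0 T); apply: (neq0_by (d := -5 * (s%:~R + epsC e))).
  cbv beta iota delta [deg Lidx Yidx Midx]; by field.
apply: mulf_neq0; last exact: K_neq0.
by rewrite oppr_eq0 pnatr_eq0.
Qed.

Lemma DY0 : e = false -> pr h <<Yidx 0>> = 0.
Proof.
move=> He.
have E1 : brb e (Lidx (-1)) (Yidx (-1)) = ((-1)%:~R / 2 - ((-1)%:~R + epsC e)) *: <<Yidx (-1 + -1)>>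
  by reflexivity.
have F1 : brb e (Lidx 2) (Yidx (-1 + -1)) = (2%:~R / 2 - ((-1 + -1)%:~R + epsC e)) *: <<Yidx 0>>.
  rewrite /brb /Lidx /Yidx (Yb_eq (j := 0)); [reflexivity|lia].
have E2 : brb e (Yidx (-1)) (Lidx 2) = (- (2%:~R / 2 - ((-1)%:~R + epsC e))) *: <<Yidx (2 + -1)>>
  by reflexivity.
have F2 : brb e (Lidx (-1)) (Yidx (2 + -1)) = ((-1)%:~R / 2 - ((2 + -1)%:~R + epsC e)) *: <<Yidx 0>>.
  rewrite /brb /Lidx /Yidx (Yb_eq (j := 0)); [reflexivity|lia].
have E3 : brb e (Lidx 2) (Lidx (-1)) = (2 - (-1))%:~R *: <<Lidx (2 + (-1))>> by reflexivity.
have F3 : brb e (Yidx (-1)) (Lidx (2 + (-1))) = (- ((2 + (-1))%:~R / 2 - ((-1)%:~R + epsC e))) *: <<Yidx 0>>.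
  rewrite /brb /Lidx /Yidx (Yb_eq (j := 0)); [reflexivity|lia].
have T := tri HP E1 F1 E2 F2 E3 F3.
apply: (scal_eq0 T); apply: (neq0_by (d := 18)).
  cbv beta iota delta [deg Lidx Yidx Midx]; rewrite He epsC_false; by field.
by rewrite pnatr_eq0.
Qed.

Lemma DY (s : int) : pr h <<Yidx s>> = 0.
Proof.
have [He|He] := boolP e.
  by apply: DY_nz; left.
have [->|Hs] := eqVneq s 0.
  by apply: DY0; apply/negbTE.
by apply: DY_nz; right.
Qed.
End S3.

Section S4.
Variable e : bool.
Variable pr : SV -> SV -> SV.
Hypothesis HP : is_comm_postLie e pr.

Lemma Lidx_eq (i j : int) : i = j -> Lidx i = Lidx j. Proof. by move->. Qed.
Lemma Yidx_eq (i j : int) : i = j -> Yidx i = Yidx j. Proof. by move->. Qed.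
Lemma Midx_eq (i j : int) : i = j -> Midx i = Midx j. Proof. by move->. Qed.

Lemma mul_eq0_r (x y : CC) : x * y = 0 -> y != 0 -> x = 0.
Proof. by move=> /eqP; rewrite mulf_eq0 => /orP [/eqP //|/eqP ->]; rewrite eqxx. Qed.

Lemma DL_noL (a i : int) : (pr h <<Lidx a>>)@_(Lidx i) = 0.
Proof.
have E := prD HP h <<Lidx a>> <<Midx 1>>.
rewrite svbr_basis (DM HP) svbr0r addr0 in E.
have E' : brb e (Lidx a) (Midx 1) = (- 1)%:~R *: <<Midx (a + 1)>> by reflexivity.
rewrite E' (prZr HP) (DM HP) scaler0 in E.
have := congr1 (mcoeff (Midx (i + 1))) E.
rewrite mcoeff0 -/(Mb 1) coef_M (@Lidx_eq (i + 1 - 1) i); last by lia.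
move/esym/mul_eq0_r; apply; exact: intr_neq0.
Qed.

Lemma DL_noY (a k : int) : (pr h <<Lidx a>>)@_(Yidx k) = 0.
Proof.
have E := prD HP h <<Lidx a>> <<Yidx (k + 1)>>.
rewrite svbr_basis (DY HP) svbr0r addr0 in E.
have E' : brb e (Lidx a) (Yidx (k + 1)) =
   (a%:~R / 2 - ((k + 1)%:~R + epsC e)) *: <<Yidx (a + (k + 1))>> by reflexivity.
rewrite E' (prZr HP) (DY HP) scaler0 in E.
have := congr1 (mcoeff (Midx (k + (k + 1) + (e:int)))) E.
rewrite mcoeff0 -/(Yb (k + 1)) (coef_Y HP) (@Yidx_eq (k + (k + 1) + (e:int) - (k + 1) - (e:int)) k);
  last by lia.
move/esym/mul_eq0_r; apply; apply: intr_neq0; lia.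
Qed.

Definition noLY (v : SV) := (forall i, v@_(Lidx i) = 0) /\ (forall k, v@_(Yidx k) = 0).

Lemma DL_noLY (a : int) : noLY (pr h <<Lidx a>>).
Proof. split; [exact: DL_noL | exact: DL_noY]. Qed.

Lemma malgU_scale (c : CC) (k : SVidx) : (<< c *g k >> : SV) = c *: <<k>>.
Proof.
apply/malgP => k'; rewrite mcoeffZ !mcoeffU.
by case: (k == k'); rewrite ?mulr1 ?mulr0.
Qed.

Lemma svbr_noL_M (v : SV) (u : int) : (forall i, v@_(Lidx i) = 0) -> svbr e v <<Midx u>> = 0.
Proof.
move=> Hv; rewrite svbr_r; apply: big1_seq => d _.
destruct d as [[i|k]|j].
- by rewrite Hv scale0r.
- by rewrite /brb /Midx scaler0.
- by rewrite /brb /Midx scaler0.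
Qed.

Lemma pr_noLY (x v : SV) : (forall j, pr x <<Midx j>> = 0) -> noLY v -> pr x v = 0.
Proof.
move=> Hx [HL HY]; rewrite [v]monalgE (prsumr HP); apply: big1_seq => d _.
rewrite malgU_scale (prZr HP).
destruct d as [[i|k]|j].
- by rewrite HL scale0r.
- by rewrite HY scale0r.
- by rewrite Hx scaler0.
Qed.
End S4.

Section S5.
Variable e : bool.
Variable pr : SV -> SV -> SV.
Hypothesis HP : is_comm_postLie e pr.

Lemma PLL_D (a t : int) : a != t -> pr <<Lidx a>> <<Lidx t>> = pr h <<Lidx (a + t)>>.
Proof.
move=> Hat.
have E := R1 HP (Lidx a) (Lidx t).
have E' : brb e (Lidx a) (Lidx t) = (a - t)%:~R *: <<Lidx (a + t)>> by reflexivity.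
rewrite E' (prZr HP) /P in E.
have Hd : deg e (Lidx a) - deg e (Lidx t) = (a - t)%:~R.
  by cbv beta iota delta [deg Lidx]; ring.
rewrite Hd in E.
apply/eqP; rewrite -subr_eq0; apply/eqP.
apply: (@scal_eq0 ((a - t)%:~R)); last by apply: intr_neq0; lia.
by rewrite scalerBr E subrr.
Qed.

Lemma PLM_neq (a j : int) : j != a -> pr <<Lidx a>> <<Midx j>> = 0.
Proof.
move=> Hja.
have E := R1 HP (Lidx a) (Midx j).
have E' : brb e (Lidx a) (Midx j) = (- j)%:~R *: <<Midx (a + j)>> by reflexivity.
rewrite E' (prZr HP) (DM HP) scaler0 /P in E.
have Hd : deg e (Lidx a) - deg e (Midx j) = (a - j)%:~R.
  by cbv beta iota delta [deg Lidx Midx]; ring.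
rewrite Hd in E.
apply: (scal_eq0 (esym E)); apply: intr_neq0; lia.
Qed.

Lemma PLM (a j : int) : pr <<Lidx a>> <<Midx j>> = 0.
Proof.
have [->|Hja] := eqVneq j a; last exact: PLM_neq.
have key : forall t u : int, t + u = a -> t != a -> u != a -> u != 0 ->
    pr <<Lidx a>> <<Midx a>> = 0.
  move=> t u Htu Hta Hua Hu0.
  have E := prD HP <<Lidx a>> <<Lidx t>> <<Midx u>>.
  have Hat : a != t by rewrite eq_sym.
  rewrite svbr_basis (PLM_neq Hua) svbr0r addr0 (PLL_D Hat) in E.
  rewrite (@svbr_noL_M e _ u (DL_noL HP (a + t))) in E.
  have E' : brb e (Lidx t) (Midx u) = (- u)%:~R *: <<Midx a>>.
    rewrite /brb /Lidx /Midx (Mb_eq (j := a)); [reflexivity|exact: Htu].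
  rewrite E' (prZr HP) in E.
  apply: (scal_eq0 E); apply: intr_neq0; lia.
have [Ha1|Ha1] := eqVneq a 1.
  apply: (key (-1) 2); lia.
apply: (key 1 (a - 1)); lia.
Qed.


Lemma DL (s : int) : pr h <<Lidx s>> = 0.
Proof.
have key : forall a c : int, a + c = s -> a != 0 -> a != c -> pr h <<Lidx s>> = 0.
  move=> a c Hs Ha0 Hac.
  have E := prH HP <<Lidx a>> h <<Lidx c>>.
  have N1 := @pr_noLY e pr HP <<Lidx a>> _ (PLM a) (DL_noLY HP c).
  have N2 := @pr_noLY e pr HP h _ (PLM 0) (DL_noLY HP (a + c)).
  rewrite N1 (PLL_D Hac) N2 subrr /h svbr_basis brb_0r (prZl HP) in E.
  have Hd : deg e (Lidx a) = a%:~R by [].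
  rewrite Hd (PLL_D Hac) in E.
  rewrite -(@Lidx_eq (a + c) s) //.
  apply: (scal_eq0 E); exact: intr_neq0.
have [Hs2|Hs2] := eqVneq s 2.
  apply: (key (-1) 3); lia.
apply: (key 1 (s - 1)); lia.
Qed.
End S5.

Section S6.
Variable e : bool.
Variable pr : SV -> SV -> SV.
Hypothesis HP : is_comm_postLie e pr.

Lemma pr_basis0 (x v : SV) : (forall d, pr x <<d>> = 0) -> pr x v = 0.
Proof.
move=> Hx; rewrite [v]monalgE (prsumr HP); apply: big1_seq => d _.
by rewrite malgU_scale (prZr HP) Hx scaler0.
Qed.

Lemma Dzero (v : SV) : pr h v = 0.
Proof.
apply: pr_basis0 => d; destruct d as [[i|k]|j].
- exact: (DL HP).
- exact: (DY HP).
- exact: (DM HP).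
Qed.

Lemma P_diff (a b : SVidx) : deg e a != deg e b -> pr <<a>> <<b>> = 0.
Proof.
move=> Hab.
have E := R1 HP a b; rewrite Dzero /P in E.
apply: (scal_eq0 (esym E)); by rewrite subr_eq0.
Qed.

Definition deg2 (a : SVidx) : int :=
  match a with inl (inl i) => 2 * i | inl (inr k) => 2 * k + (if e then 1 else 0) | inr i => 2 * i end.

Lemma deg_deg2 (a : SVidx) : deg e a = (deg2 a)%:~R / 2.
Proof.
destruct a as [[i|k]|j]; cbv beta iota delta [deg deg2].
- by field.
- by case: e; rewrite ?epsC_false ?epsC_true; field.
- by field.
Qed.

Lemma deg_neq (a b : SVidx) : deg2 a != deg2 b -> deg e a != deg e b.
Proof.
move=> H; rewrite !deg_deg2; apply/eqP => E.
have : ((deg2 a)%:~R : CC) = (deg2 b)%:~R.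
  apply: (mulIf (x := 2^-1)); first by rewrite invr_eq0 pnatr_eq0.
  exact: E.
move/eqP; rewrite eqr_int => /eqP E2; move: H; rewrite E2 eqxx; done.
Qed.

Lemma decomp (b : SVidx) : exists s t (mu : CC),
  [/\ mu != 0, brb e s t = mu *: <<b>>, deg2 s != deg2 b & deg2 t != deg2 b].
Proof.
destruct b as [[n|k]|n].
- have [Hn|Hn] := boolP ((n == -1) || (n == -2)).
    exists (Lidx (n - 1)), (Lidx 1), ((n - 1 - 1)%:~R); split.
    + apply: intr_neq0; lia.
    + rewrite /brb /Lidx (Lb_eq (j := n)); [reflexivity|lia].
    + rewrite /deg2 /Lidx; lia.
    + rewrite /deg2 /Lidx; lia.
  exists (Lidx (n + 1)), (Lidx (-1)), ((n + 1 - -1)%:~R); split.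
  + apply: intr_neq0; lia.
  + rewrite /brb /Lidx (Lb_eq (j := n)); [reflexivity|lia].
  + rewrite /deg2 /Lidx; lia.
  + rewrite /deg2 /Lidx; lia.
- have [Hk|Hk] := boolP ((2 * k + (if e then 1 else 0) == 2) || (2 * k + (if e then 1 else 0) == 3)).
    exists (Lidx (-1)), (Yidx (k + 1)), ((-1)%:~R / 2 - ((k + 1)%:~R + epsC e)); split.
    + apply: (neq0_by (d := (- (2 * k + (if e then 1 else 0) + 3))%:~R / 2)).
        by case: e Hk => Hk; cbv beta iota; rewrite ?epsC_false ?epsC_true; field.
      apply: mulf_neq0; last by rewrite invr_eq0 pnatr_eq0.
      apply: intr_neq0; case: e Hk => /= Hk; lia.
    + rewrite /brb /Lidx /Yidx (Yb_eq (j := k)); [reflexivity|lia].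
    + rewrite /deg2 /Lidx /Yidx; case: e Hk => /= Hk; lia.
    + rewrite /deg2 /Yidx; lia.
  exists (Lidx 1), (Yidx (k - 1)), (1%:~R / 2 - ((k - 1)%:~R + epsC e)); split.
  + apply: (neq0_by (d := (3 - (2 * k + (if e then 1 else 0)))%:~R / 2)).
      by case: e Hk => Hk; cbv beta iota; rewrite ?epsC_false ?epsC_true; field.
    apply: mulf_neq0; last by rewrite invr_eq0 pnatr_eq0.
    apply: intr_neq0; case: e Hk => /= Hk; lia.
  + rewrite /brb /Lidx /Yidx (Yb_eq (j := k)); [reflexivity|lia].
  + rewrite /deg2 /Lidx /Yidx; case: e Hk => /= Hk; lia.
  + rewrite /deg2 /Yidx; lia.
- have [Hn|Hn] := eqVneq n 1.
    exists (Lidx (-1)), (Midx 2), ((- 2)%:~R); split.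
    + apply: intr_neq0; lia.
    + rewrite /brb /Lidx /Midx (Mb_eq (j := n)); [reflexivity|lia].
    + rewrite /deg2 /Lidx /Midx; lia.
    + rewrite /deg2 /Midx; lia.
  exists (Lidx 1), (Midx (n - 1)), ((- (n - 1))%:~R); split.
  + apply: intr_neq0; lia.
  + rewrite /brb /Lidx /Midx (Mb_eq (j := n)); [reflexivity|lia].
  + rewrite /deg2 /Lidx /Midx; lia.
  + rewrite /deg2 /Midx; lia.
Qed.

Lemma Pzero (a b : SVidx) : pr <<a>> <<b>> = 0.
Proof.
have [Hab|Hab] := eqVneq (deg2 a) (deg2 b); last exact/P_diff/deg_neq.
have [s [t [mu [Hmu Hst Hs Ht]]]] := decomp b.
have E := prD HP <<a>> <<s>> <<t>>.
rewrite svbr_basis Hst (prZr HP) in E.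
have Has : deg e a != deg e s by apply: deg_neq; rewrite Hab eq_sym.
have Hat : deg e a != deg e t by apply: deg_neq; rewrite Hab eq_sym.
rewrite (P_diff Has) (P_diff Hat) in E.
rewrite svbr0l svbr0r addr0 in E.
exact: (scal_eq0 E).
Qed.

Lemma all_zero (x y : SV) : pr x y = 0.
Proof.
apply: pr_basis0 => d; rewrite (prC HP).
by apply: pr_basis0 => d'; exact: Pzero.
Qed.
End S6.

Unset Implicit Arguments.
Theorem theorem4p3 (e : bool) (pr : SV -> SV -> SV) :
  is_comm_postLie e pr -> forall x y : SV, pr x y = 0.
Proof. move=> HP x y; exact: (all_zero HP). Qed.
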